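(* Let $QF(1)$ be the subgroup of $QF$ consisting of those elements fixing every word that does not begin with the letter $1$. Then $QF(1)\cong QF$, and there is an injective, non-surjective-allowed endomorphism $\theta$ of $QF(1)$ (namely conjugation by $\alpha$) such that $QF$ is isomorphic to the ascending HNN-extension $QF(1)\ast_{\theta,t}=\langle QF(1),t\mid t^{-1}ht=\theta(h),\ h\in QF(1)\rangle$.
   Context: Let $\{0,1\}^*$ be the finite words over $\{0,1\}$, the vertices of the rooted binary tree in which $x$ has children $x0$ and $x1$ (two edge colours). $QV$ is the group of bijections $\tau$ of $\{0,1\}^*$ with $\tau(x0)=\tau(x)0$ and $\tau(x1)=\tau(x)1$ for all but finitely many $x$. Each such $\tau$ induces a homeomorphism $\pi(\tau)$ of $\{0,1\}^{\mathbb N}$ by $\pi(\tau)(\ell\omega)=\tau(\ell)\omega$, for $\ell$ in a finite maximal prefix-antichain $L$ with $\tau(\ell s)=\tau(\ell)s$ for all $\ell\in L$ and words $s$; this gives a homomorphism $\pi$ onto Thompson's group $V$. $F\le V$ is the subgroup of lexicographic-order-preserving elements and $QF=\pi^{-1}(F)$. The element $\alpha\in QF$ is the bijection with $\alpha(\varepsilon)=0$, $\alpha(1)=\varepsilon$, $\alpha(0s)=00s$, $\alpha(10s)=01s$, $\alpha(11s)=1s$ for all words $s$ ($\varepsilon$ the empty word). An HNN-extension is ascending if $\theta$ is injective. *)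

(* Defs.v *)
(* Words over {0,1}: 0 = false, 1 = true. *)
From mathcomp Require Import all_boot.
Set Implicit Arguments. Unset Strict Implicit. Unset Printing Implicit Defensive.

Definition word := seq bool.
Definition stream := nat -> bool.
Definition perm_word := word -> word.

Definition app_stream (l : word) (w : stream) : stream :=
  fun n => if n < size l then nth false l n else w (n - size l).

Definition lexlt (x y : stream) : Prop :=
  exists n, (forall i, i < n -> x i = y i) /\ x n = false /\ y n = true.

Definition max_antichain (L : seq word) : Prop :=
  uniq L /\
  (forall l l', l \in L -> l' \in L -> l != l' -> ~~ prefix l l') /\
  (forall w : word, exists2 l, l \in L & prefix l w || prefix w l).

Definition inQV (tau : perm_word) : Prop :=
  bijective tau /\
  exists S : seq word, forall x : word, x \notin S ->
    tau (rcons x false) = rcons (tau x) false /\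
    tau (rcons x true) = rcons (tau x) true.

(* pi(tau) in F: for some finite maximal prefix-antichain L with
   tau(l s) = tau(l) s, the induced map pi(tau)(l w) = tau(l) w on {0,1}^N
   preserves the lexicographic order *)
Definition inQF (tau : perm_word) : Prop :=
  inQV tau /\
  exists L : seq word, max_antichain L /\
    (forall l s, l \in L -> tau (l ++ s) = tau l ++ s) /\
    (forall l l' (w w' : stream), l \in L -> l' \in L ->
        lexlt (app_stream l w) (app_stream l' w') ->
        lexlt (app_stream (tau l) w) (app_stream (tau l') w')).

Definition inQF1 (tau : perm_word) : Prop :=
  inQF tau /\ forall w : word, head false w = false -> tau w = w.

Definition alpha (w : word) : word :=
  match w with
  | [::] => [:: false]
  | false :: s => false :: false :: s
  | [:: true] => [::]
  | true :: false :: s => false :: true :: s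
  | true :: true :: s => true :: s
  end.

Definition alpha_inv (w : word) : word :=
  match w with
  | [::] => [:: true]
  | [:: false] => [::]
  | false :: false :: s => false :: s
  | false :: true :: s => true :: false :: s
  | true :: s => true :: true :: s
  end.

(* theta = conjugation by alpha: theta(h) = alpha^-1 h alpha
   (group product = composition of maps, (g h)(x) = g (h x)) *)
Definition theta (h : perm_word) : perm_word := alpha_inv \o h \o alpha.

Record group := Group {
  gcar : Type;
  gmul : gcar -> gcar -> gcar;
  gone : gcar;
  ginv : gcar -> gcar;
  gmulA : forall x y z, gmul x (gmul y z) = gmul (gmul x y) z;
  gmul1 : forall x, gmul gone x = x;
  gmulV : forall x, gmul (ginv x) x = gone
}.

Definition hom_on (G : perm_word -> Prop) (K : group) (f : perm_word -> gcar K) :=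
  forall g h, G g -> G h -> f (g \o h) = gmul (f g) (f h).

Definition iso_on (G H : perm_word -> Prop) (phi : perm_word -> perm_word) :=
  (forall g, G g -> H (phi g)) /\
  (forall g h, G g -> G h -> phi (g \o h) = phi g \o phi h) /\
  (forall g h, G g -> G h -> phi g = phi h -> g = h) /\
  (forall k, H k -> exists2 g, G g & phi g = k).

(* H is (isomorphic to) the ascending HNN-extension
   G *_{th,t} = < G, t | t^-1 h t = th(h), h in G >,
   characterised by the universal property of this presentation. *)
Definition is_HNN (G : perm_word -> Prop) (th : perm_word -> perm_word)
    (H : perm_word -> Prop) : Prop :=
  exists (iota : perm_word -> perm_word) (t tinv : perm_word),
    (forall g, G g -> H (iota g)) /\
    (forall g h, G g -> G h -> iota (g \o h) = iota g \o iota h) /\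
    H t /\ H tinv /\ t \o tinv = id /\ tinv \o t = id /\
    (forall h, G h -> tinv \o iota h \o t = iota (th h)) /\
    (forall (K : group) (f : perm_word -> gcar K) (k : gcar K),
       hom_on G f ->
       (forall h, G h -> gmul (gmul (ginv k) (f h)) k = f (th h)) ->
       exists F : perm_word -> gcar K,
         hom_on H F /\ (forall g, G g -> F (iota g) = f g) /\ F t = k /\
         (forall F' : perm_word -> gcar K,
            hom_on H F' -> (forall g, G g -> F' (iota g) = f g) -> F' t = k ->
            forall x, H x -> F' x = F x)).

(* Main.v *)
Require Import Defs.
From mathcomp Require Import all_boot.
From Stdlib Require FunctionalExtensionality PropExtensionality ClassicalEpsilon Classical.
Notation functional_extensionality := FunctionalExtensionality.functional_extensionality.
Notation propositional_extensionality := PropExtensionality.propositional_extensionality.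
Set Implicit Arguments. Unset Strict Implicit. Unset Printing Implicit Defensive.

Definition zero : stream := fun _ => false.
Definition scons (b : bool) (s : stream) : stream :=
  fun n => if n is n'.+1 then s n' else b.

Lemma app_cons b x w : app_stream (b :: x) w = scons b (app_stream x w).
Proof.
apply: functional_extensionality => -[|n] //; try by rewrite /app_stream /= ltnS subSS.
Qed.

Lemma app_nil w : app_stream [::] w = w.
Proof. by apply: functional_extensionality => n; rewrite /app_stream /= subn0. Qed.

Lemma app_cat x y w : app_stream (x ++ y) w = app_stream x (app_stream y w).
Proof. by elim: x => [|b x IH] /=; rewrite ?app_nil // !app_cons IH. Qed.

Lemma lexlt_scons a s a' s' :
  lexlt (scons a s) (scons a' s') = ((a = false /\ a' = true) \/ (a = a' /\ lexlt s s')).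
Proof.
apply: propositional_extensionality; split.
- move=> [[|n] [H1 [H2 H3]]]; first by left.
  right; split; first exact: (H1 0).
  by exists n; split=> // i Hi; apply: (H1 i.+1).
- case=> [[-> ->]|[-> [n [H1 [H2 H3]]]]]; first by exists 0.
  by exists n.+1; split=> // -[|i] Hi //=; apply: H1.
Qed.

Lemma scons_zero : scons false zero = zero.
Proof. by apply: functional_extensionality => -[]. Qed.

Lemma app_nseq_zero n : app_stream (nseq n false) zero = zero.
Proof. by elim: n => [|n IH]; rewrite ?app_nil //= app_cons IH scons_zero. Qed.

Lemma not_lexlt_zero s : ~ lexlt s zero.
Proof. by move=> [n [_ [_ H]]]. Qed.

Lemma lexlt_zero_l s n : s n = true -> lexlt zero s.
Proof.
move=> Hn.
have ex : exists n, s n by exists n.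
case: (ex_minnP ex) => m Hm Hmin.
exists m; split; last by split.
move=> i Hi; case E: (s i) => //.
by move: (Hmin i E); rewrite leqNgt Hi.
Qed.

Lemma app_zero_nseq x : app_stream x zero = zero -> x = nseq (size x) false.
Proof.
elim: x => [|b x IH] //=; rewrite app_cons => E.
have Hb : b = false by move: (f_equal (fun s => s 0) E).
have Hx : app_stream x zero = zero.
  by apply: functional_extensionality => n; exact: (f_equal (fun s => s n.+1) E).
by rewrite {1}(IH Hx) Hb.
Qed.

Lemma cat_nseq x y K : x ++ y = nseq K false -> x = nseq (size x) false.
Proof.
elim: x K => [|b x IH] K //; case: K => [|K] //= E.
by case: E => Hb E; rewrite Hb -(IH _ E).
Qed.

Fixpoint allw (n : nat) : seq word :=
  if n is n'.+1 then map (cons false) (allw n') ++ map (cons true) (allw n')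
  else [:: [::]].

Fixpoint shortw (n : nat) : seq word :=
  if n is n'.+1 then allw n' ++ shortw n' else [::].

Lemma mem_allw x : x \in allw (size x).
Proof.
elim: x => [|b x IH] //=; rewrite mem_cat.
by case: b; apply/orP; [right|left]; apply: map_f.
Qed.

Lemma size_allw n x : x \in allw n -> size x = n.
Proof.
elim: n x => [|n IH] x /=; first by rewrite inE => /eqP ->.
by rewrite mem_cat => /orP[] /mapP [y Hy ->] /=; rewrite (IH _ Hy).
Qed.

Lemma uniq_allw n : uniq (allw n).
Proof.
have inj (b : bool) : injective (cons b) by move=> ? ? [].
elim: n => [|n IH] //=; rewrite cat_uniq !map_inj_uniq; try exact: inj.
rewrite IH /= andbT; apply/hasPn => y /mapP [z _ ->]; apply/mapP => -[u _]; by case.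
Qed.

Lemma mem_shortw x N : size x < N -> x \in shortw N.
Proof.
elim: N => [|N IH] //=; rewrite ltnS leq_eqVlt mem_cat => /orP[/eqP <-|H].
  by rewrite mem_allw.
by rewrite IH ?orbT.
Qed.

Lemma prefix_eq (l l' : word) : prefix l l' -> size l = size l' -> l = l'.
Proof.
move=> /prefixP [s ->]; rewrite size_cat => H.
have : size s == 0 by rewrite -(eqn_add2l (size l)) addn0 -H.
by rewrite size_eq0 => /eqP ->; rewrite cats0.
Qed.

Lemma bound_seq (A : Type) (f : A -> nat) (S : seq A) :
  exists B, forall x, List.In x S -> f x <= B.
Proof.
elim: S => [|a S [B HB]]; first by exists 0.
exists (maxn (f a) B) => x /= [<-|Hx]; first by rewrite leq_maxl.
by rewrite (leq_trans (HB _ Hx)) ?leq_maxr.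
Qed.

Lemma bound_mem (A : eqType) (f : A -> nat) (S : seq A) :
  exists B, forall x, x \in S -> f x <= B.
Proof.
elim: S => [|a S [B HB]]; first by exists 0.
exists (maxn (f a) B) => x; rewrite inE => /orP[/eqP ->|Hx]; first by rewrite leq_maxl.
by rewrite (leq_trans (HB _ Hx)) ?leq_maxr.
Qed.

Definition depthP (t : perm_word) N :=
  forall x s, N <= size x -> t (x ++ s) = t x ++ s.
Definition ordP (t : perm_word) N :=
  forall x x' w w', N <= size x -> N <= size x' ->
    lexlt (app_stream x w) (app_stream x' w') ->
    lexlt (app_stream (t x) w) (app_stream (t x') w').
Definition QFd (t : perm_word) :=
  bijective t /\ exists N, depthP t N /\ ordP t N.

Lemma QFd_QF t : QFd t -> inQF t.
Proof.
move=> [bij [N [HD HO]]]; split.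
  split=> //; exists (shortw N) => x Hx.
  have HN : N <= size x by rewrite leqNgt; apply: contra Hx; exact: mem_shortw.
  by rewrite -!cats1 !HD.
exists (allw N); split; last split.
- split; first exact: uniq_allw.
  split.
    move=> l l' Hl Hl' Hne; apply/negP => Hp; move/negP: Hne; apply.
    by apply/eqP; apply: prefix_eq => //; rewrite (size_allw Hl) (size_allw Hl').
  move=> w; case: (leqP N (size w)) => HN.
    exists (take N w); last by rewrite prefix_take.
    by rewrite -{2}(size_takel HN) mem_allw.
  exists (w ++ nseq (N - size w) false); last by rewrite prefix_prefix orbT.
  by rewrite -{2}(_ : size (w ++ nseq (N - size w) false) = N) ?mem_allw //
     size_cat size_nseq subnKC // ltnW.
- by move=> l s Hl; apply: HD; rewrite (size_allw Hl).
- by move=> l l' w w' Hl Hl'; apply: HO; rewrite ?(size_allw Hl) ?(size_allw Hl').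
Qed.

Lemma QF_QFd t : inQF t -> QFd t.
Proof.
move=> [[bij _] [L [[_ [_ Hmax]] [HD HO]]]]; split=> //.
have [N HN] := bound_mem size L.
have dec x : N <= size x -> exists l u, l \in L /\ x = l ++ u.
  move=> Hx; case: (Hmax x) => l Hl /orP[] /prefixP [u Hu].
    by exists l, u.
  exists l, [::]; split=> //; rewrite cats0.
  have := HN _ Hl; rewrite Hu size_cat => H.
  have : size u = 0 by apply/eqP; rewrite -(eqn_add2l (size x)) addn0 eqn_leq leq_addr (leq_trans H).
  by move/eqP; rewrite size_eq0 => /eqP ->; rewrite cats0.
exists N; split.
  move=> x s /dec [l [u [Hl ->]]].
  by rewrite -catA !HD // catA.
move=> x x' w w' /dec [l [u [Hl ->]]] /dec [l' [u' [Hl' ->]]].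
rewrite !HD // !app_cat; exact: HO.
Qed.

Lemma depth_size t N M x : depthP t N -> N + M <= size x -> M <= size (t x).
Proof.
move=> HD Hx; rewrite -(cat_take_drop N x) HD; last first.
  by rewrite size_takel // (leq_trans (leq_addr M N)).
by rewrite size_cat size_drop (leq_trans _ (leq_addl _ _)) // leq_subRL // (leq_trans (leq_addr M N)).
Qed.

Lemma QFd_id : QFd (fun x => x).
Proof. split; first by exists (fun x => x). by exists 0; split. Qed.

Lemma QFd_comp g h : QFd g -> QFd h -> QFd (g \o h).
Proof.
move=> [[gi g1 g2] [Ng [HDg HOg]]] [[hi h1 h2] [Nh [HDh HOh]]]; split.
  by exists (hi \o gi) => x /=; rewrite ?g1 ?h1 ?h2 ?g2.
exists (Nh + Ng); split.
  move=> x s Hx /=; rewrite HDh ?HDg //; first exact: depth_size HDh Hx.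
  by rewrite (leq_trans (leq_addr Ng Nh)).
move=> x x' w w' Hx Hx' H /=; apply: HOg; try exact: depth_size HDh _.
by apply: HOh => //; rewrite (leq_trans (leq_addr Ng Nh)).
Qed.

Lemma QFd_iter n f : QFd f -> QFd (iter n f).
Proof.
move=> Hf; elim: n => [|n IH]; first exact: QFd_id.
exact: (QFd_comp Hf IH).
Qed.

Lemma alphaK : cancel alpha alpha_inv.
Proof. by case=> [|[] [|[] s]]. Qed.
Lemma alpha_invK : cancel alpha_inv alpha.
Proof. by case=> [|[] [|[] s]]. Qed.

Ltac lexcase := rewrite ?app_cons !lexlt_scons; intuition congruence.

Lemma QFd_alpha : QFd alpha.
Proof.
split; first by exists alpha_inv; [exact: alphaK | exact: alpha_invK].
exists 2; split.
  by move=> [|a [|b x]] s //= _; case: a; case: b.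
move=> [|a [|b x]] [|a' [|b' x']] w w' //= _ _.
case: a; case: b; case: a'; case: b' => /=; lexcase.
Qed.

Lemma QFd_alpha_inv : QFd alpha_inv.
Proof.
split; first by exists alpha; [exact: alpha_invK | exact: alphaK].
exists 2; split.
  by move=> [|a [|b x]] s //= _; case: a; case: b.
move=> [|a [|b x]] [|a' [|b' x']] w w' //= _ _.
case: a; case: b; case: a'; case: b' => /=; lexcase.
Qed.

Definition A n := iter n alpha.
Definition B n := iter n alpha_inv.

Lemma ABK n x : A n (B n x) = x.
Proof.
elim: n x => [|n IH] x //; rewrite /A /B iterSr iterS alpha_invK; exact: IH.
Qed.
Lemma BAK n x : B n (A n x) = x.
Proof.
elim: n x => [|n IH] x //; rewrite /A /B iterSr iterS alphaK; exact: IH.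
Qed.

Lemma A_W0 n w : head false w = false -> A n w = nseq n false ++ w.
Proof.
move=> Hw; elim: n => [|n IH] //; rewrite /A iterS -/(A n) IH.
by case: n {IH} => [|n] /=; [case: w Hw => [|[] s]|].
Qed.

Lemma B_W0 n w : head false w = false -> B n (nseq n false ++ w) = w.
Proof.
move=> Hw; elim: n => [|n IH] //; rewrite /B iterSr -/(B n) -{2}IH.
by congr (B n _); case: n {IH} => [|n] /=; [case: w Hw => [|[] s]|].
Qed.

Definition QF1d (g : perm_word) := QFd g /\ forall w, head false w = false -> g w = w.

Lemma QF1d_QF1 g : QF1d g <-> inQF1 g.
Proof.
split=> [[H1 H2]|[H1 H2]]; split=> //; [exact: QFd_QF | exact: QF_QFd].
Qed.

Lemma QF1d_comp g h : QF1d g -> QF1d h -> QF1d (g \o h).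
Proof.
move=> [Hg Fg] [Hh Fh]; split; first exact: QFd_comp.
by move=> w Hw /=; rewrite Fh // Fg.
Qed.

Lemma QF1d_theta h : QF1d h -> QF1d (theta h).
Proof.
move=> [Hh Fh]; split.
  exact: QFd_comp (QFd_comp QFd_alpha_inv Hh) QFd_alpha.
by move=> [|[] s] //= _; rewrite /theta /= Fh.
Qed.

Lemma QF1d_iter_theta d h : QF1d h -> QF1d (iter d theta h).
Proof. by move=> H; elim: d => [|d IH] //; exact: QF1d_theta. Qed.

Lemma iter_theta d h x : iter d theta h x = B d (h (A d x)).
Proof.
elim: d x => [|d IH] x //.
by rewrite iterS /theta /= IH /A /B -iterSr.
Qed.

Definition dec (x : perm_word) (p : nat * perm_word * nat) :=
  QF1d p.1.2 /\ x = A p.1.1 \o p.1.2 \o B p.2.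

Lemma dec_exists t : QFd t -> exists p, dec t p.
Proof.
move=> Ht; have [[ti t1 t2] [N [HD HO]]] := Ht.
have [Bd HB] := bound_mem (fun x => size (t x)) (shortw N).
set z := ti (nseq Bd.+1 false).
have tz : t z = nseq Bd.+1 false by rewrite /z t2.
have Nz : N <= size z.
  rewrite leqNgt; apply/negP => /mem_shortw /HB; rewrite tz size_nseq ltnn //.
have Hz1 : size (take N z) = N by rewrite size_takel.
have Etz1 : t (take N z) = nseq (size (t (take N z))) false.
  apply: (@cat_nseq _ (drop N z) Bd.+1); rewrite -HD ?Hz1 // cat_take_drop //.
have Ez1 : take N z = nseq N false.
  apply: Classical_Prop.NNPP => Hne.
  have Hne' : app_stream (take N z) zero <> zero.
    by move=> /app_zero_nseq; rewrite Hz1.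
  have [i Hi] : exists i, app_stream (take N z) zero i = true.
    apply: Classical_Prop.NNPP => Hn; apply: Hne'; apply: functional_extensionality => i.
    by case E: (app_stream (take N z) zero i) => //; case: Hn; exists i.
  have := lexlt_zero_l Hi; rewrite -{1}(app_nseq_zero N) => Hlt.
  have := HO _ _ _ _ _ _ Hlt; rewrite size_nseq Hz1 Etz1 app_nseq_zero => H.
  by apply: not_lexlt_zero; apply: H.
set j := size (t (take N z)).
exists (j, B j \o t \o A N, N); split.
  split; first exact: QFd_comp (QFd_comp (QFd_iter _ QFd_alpha_inv) Ht) (QFd_iter _ QFd_alpha).
  move=> w Hw /=; rewrite A_W0 // HD ?size_nseq // -Ez1 Etz1 -/j; exact: B_W0.
by apply: functional_extensionality => x /=; rewrite !ABK.
Qed.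

Local Notation "x ⋆ y" := (gmul x y) (at level 40, left associativity).

Lemma gmulVr (K : group) (x : gcar K) : x ⋆ ginv x = gone K.
Proof.
rewrite -[x ⋆ ginv x]gmul1 -{1}(gmulV (ginv x)) -gmulA [ginv x ⋆ (x ⋆ ginv x)]gmulA.
by rewrite gmulV gmul1 gmulV.
Qed.

Lemma gmulr1 (K : group) (x : gcar K) : x ⋆ gone K = x.
Proof. by rewrite -(gmulV x) gmulA gmulVr gmul1. Qed.

Lemma gcancel_l (K : group) (k a b : gcar K) : k ⋆ a = k ⋆ b -> a = b.
Proof.
by move=> E; rewrite -(gmul1 a) -(gmulV k) -gmulA E gmulA gmulV gmul1.
Qed.

Lemma gidem (K : group) (a : gcar K) : a ⋆ a = a -> a = gone K.
Proof. by move=> E; apply: (@gcancel_l _ a); rewrite E gmulr1. Qed.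

Definition P (K : group) (k : gcar K) n := iter n (@gmul K k) (gone K).
Definition Q (K : group) (k : gcar K) n := iter n (@gmul K (ginv k)) (gone K).

Lemma P_add K k a b : P k (a + b) = P k a ⋆ @P K k b.
Proof. elim: a => [|a IH]; first by rewrite /= gmul1. by rewrite addSn /P /= -!/(P k _) IH gmulA. Qed.
Lemma Q_add K k a b : Q k (a + b) = Q k a ⋆ @Q K k b.
Proof. elim: a => [|a IH]; first by rewrite /= gmul1. by rewrite addSn /Q /= -!/(Q k _) IH gmulA. Qed.

Lemma P_S K k n : @P K k n.+1 = P k n ⋆ k.
Proof. by rewrite -addn1 P_add /P /= gmulr1. Qed.
Lemma Q_S K k n : @Q K k n.+1 = Q k n ⋆ ginv k.
Proof. by rewrite -addn1 Q_add /Q /= gmulr1. Qed.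

Lemma PQ K k n : P k n ⋆ @Q K k n = gone K.
Proof.
elim: n => [|n IH]; first by rewrite gmul1.
rewrite P_S /Q /= -/(Q k n) -gmulA [k ⋆ (_ ⋆ _)]gmulA gmulVr gmul1 //.
Qed.
Lemma QP K k n : Q k n ⋆ @P K k n = gone K.
Proof.
elim: n => [|n IH]; first by rewrite gmul1.
rewrite Q_S /P /= -/(P k n) -gmulA [ginv k ⋆ (_ ⋆ _)]gmulA gmulV gmul1 //.
Qed.

Lemma PQ_r K k n (x : gcar K) : x ⋆ P k n ⋆ Q k n = x.
Proof. by rewrite -gmulA PQ gmulr1. Qed.
Lemma QP_r K k n (x : gcar K) : x ⋆ Q k n ⋆ P k n = x.
Proof. by rewrite -gmulA QP gmulr1. Qed.

Definition val (K : group) (k : gcar K) (f : perm_word -> gcar K) (p : nat * perm_word * nat) :=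
  P k p.1.1 ⋆ f p.1.2 ⋆ Q k p.2.

Definition relH (K : group) (k : gcar K) (f : perm_word -> gcar K) :=
  forall h, inQF1 h -> ginv k ⋆ f h ⋆ k = f (theta h).

Lemma f_iter K k f d h : @relH K k f -> QF1d h ->
  f (iter d theta h) = Q k d ⋆ f h ⋆ P k d.
Proof.
move=> Hr Hh; elim: d => [|d IH]; first by rewrite /= gmul1 gmulr1.
rewrite iterS -Hr; last by apply/QF1d_QF1; exact: QF1d_iter_theta.
by rewrite IH P_S /Q /= -/(Q k d) !gmulA.
Qed.

Lemma A_add a b u : A (a + b) u = A a (A b u).
Proof. exact: iterD. Qed.
Lemma B_add a b u : B (a + b) u = B a (B b u).
Proof. exact: iterD. Qed.

Lemma dec_shift K k f x m h n d : @relH K k f -> dec x (m, h, n) ->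
  dec x (m + d, iter d theta h, n + d) /\ val k f (m, h, n) = val k f (m + d, iter d theta h, n + d).
Proof.
move=> Hr [Hh Ex]; rewrite /= in Hh Ex; split; first split.
- exact: QF1d_iter_theta.
- rewrite Ex; apply: functional_extensionality => y /=.
  by rewrite iter_theta A_add (addnC n) B_add !ABK.
- rewrite /val /= (f_iter d Hr Hh) P_add (addnC n) Q_add !gmulA !PQ_r //.
Qed.

Lemma dec_core a b c g g' : QF1d g -> QF1d g' ->
  A a \o g \o B c = A b \o g' \o B c -> a = b /\ g = g'.
Proof.
move=> [_ Fg] [_ Fg'] E.
have E' z : A a (g z) = A b (g' z).
  by have := f_equal (fun F => F (A c z)) E; rewrite /= BAK.
have Hab : a = b.
  have := E' [::]; rewrite Fg // Fg' // !A_W0 // !cats0 => /(f_equal size).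
  by rewrite !size_nseq.
split=> //; subst b; apply: functional_extensionality => z.
by rewrite -(BAK a (g z)) E' BAK.
Qed.

Lemma val_wd K k f x p q : @relH K k f -> dec x p -> dec x q -> val k f p = val k f q.
Proof.
move: p q => [[m h] n] [[m' h'] n'] Hr Hp Hq.
have [Hp1 Vp] := dec_shift n' Hr Hp.
have [Hq1 Vq] := dec_shift n Hr Hq.
rewrite Vp Vq; rewrite (addnC n') in Hq1 *.
case: Hp1 => /= G1 E1; case: Hq1 => /= G2 E2.
have [Em Eh] := dec_core G1 G2 (etrans (esym E1) E2).
by rewrite /val /= Em Eh.
Qed.

Definition Fdef (K : group) (k : gcar K) (f : perm_word -> gcar K) (x : perm_word) : gcar K :=
  match ClassicalEpsilon.excluded_middle_informative (exists p, dec x p) with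
  | left H => val k f (proj1_sig (ClassicalEpsilon.constructive_indefinite_description _ H))
  | right _ => gone K
  end.

Lemma F_val K k f x p : @relH K k f -> dec x p -> Fdef k f x = val k f p.
Proof.
move=> Hr Hp; rewrite /Fdef.
case: ClassicalEpsilon.excluded_middle_informative => [H|H]; last by case: H; exists p.
case: ClassicalEpsilon.constructive_indefinite_description => q Hq /=.
exact: val_wd Hr Hq Hp.
Qed.

Lemma F_hom K k f x y p q : @relH K k f -> hom_on inQF1 f -> dec x p -> dec y q ->
  Fdef k f (x \o y) = Fdef k f x ⋆ Fdef k f y.
Proof.
move: p q => [[m g] n] [[p h] q] Hr Hf Hx Hy.
rewrite (F_val Hr Hx) (F_val Hr Hy).
case: Hx => /= Gg Ex; case: Hy => /= Gh Ey; subst x y.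
case: (leqP n p) => Hnp.
- set d := p - n; have Ep : p = n + d by rewrite /d subnKC.
  have Gd := QF1d_iter_theta d Gg.
  rewrite (@F_val _ _ _ _ (m + d, iter d theta g \o h, q) Hr); last first.
    split; first exact: QF1d_comp.
    apply: functional_extensionality => z /=.
    by rewrite Ep A_add BAK iter_theta A_add !ABK.
  rewrite /val /= Hf; try by apply/QF1d_QF1.
  rewrite (f_iter d Hr Gg) Ep !P_add !gmulA !QP_r !PQ_r //.
- set d := n - p; have En : n = d + p by rewrite /d subnK // ltnW.
  have Gd := QF1d_iter_theta d Gh.
  rewrite (@F_val _ _ _ _ (m, g \o iter d theta h, d + q) Hr); last first.
    split; first exact: QF1d_comp.
    apply: functional_extensionality => z /=.
    by rewrite En B_add BAK iter_theta B_add !ABK.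
  rewrite /val /= Hf; try by apply/QF1d_QF1.
  rewrite (f_iter d Hr Gh) En !Q_add !gmulA !QP_r !PQ_r //.
Qed.

Definition phi (g : perm_word) : perm_word := fun s => behead (g (true :: s)).
Definition psi (k : perm_word) : perm_word :=
  fun w => if w is true :: s then true :: k s else w.

Lemma inj_bij (g : perm_word) : bijective g -> injective g.
Proof. by move=> [gi g1 _]; exact: can_inj g1. Qed.

Lemma gtrue g s : QF1d g -> g (true :: s) = true :: phi g s.
Proof.
move=> [[Hb _] Fg]; rewrite /phi.
case E: (g (true :: s)) => [|[] u] //.
  by have := inj_bij Hb (etrans E (esym (Fg [::] erefl))).
by have := inj_bij Hb (etrans E (esym (Fg (false :: u) erefl))).
Qed.

Lemma QFd_phi g : QF1d g -> QFd (phi g).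
Proof.
move=> Hg; have [[[gi g1 g2] [N [HD HO]]] Fg] := Hg.
have gitrue s : gi (true :: s) = true :: behead (gi (true :: s)).
  case E: (gi (true :: s)) => [|[] u] //=.
    by have := g2 (true :: s); rewrite E Fg.
  by have := g2 (true :: s); rewrite E Fg.
split.
  exists (fun s => behead (gi (true :: s))) => s.
    by rewrite /phi (gtrue _ Hg) /= -(gtrue _ Hg) g1.
  by rewrite /phi -gitrue g2.
exists N; split.
  move=> x s Hx; rewrite /phi -cat_cons HD /=; last exact: leqW.
  by rewrite gtrue.
move=> x x' w w' Hx Hx' H.
have H1 : lexlt (app_stream (true :: x) w) (app_stream (true :: x') w').
  by rewrite !app_cons lexlt_scons; right.
have := HO (true :: x) (true :: x') w w' (leqW Hx) (leqW Hx') H1.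
rewrite !gtrue // !app_cons lexlt_scons; intuition congruence.
Qed.

Lemma QF1d_psi k : QFd k -> QF1d (psi k).
Proof.
move=> [[ki k1 k2] [N [HD HO]]]; split; last by move=> [|[] s].
split.
  by exists (psi ki) => -[|[] s] //=; rewrite ?k1 ?k2.
exists N.+1; split.
  by move=> [|[] x] s //= Hx; rewrite HD.
move=> [|a x] [|a' x'] w w' //= Hx Hx'.
case: a; case: a' => /=; rewrite !app_cons !lexlt_scons; try intuition congruence.
move=> [[]|[_ H]] //; right; split=> //; exact: HO.
Qed.

Lemma phi_psi k : phi (psi k) = k.
Proof. by apply: functional_extensionality. Qed.

Lemma iso_part : exists phi, iso_on inQF1 inQF phi.
Proof.
exists phi; split; last split; last split.
- by move=> g /QF1d_QF1 Hg; apply: QFd_QF; exact: QFd_phi.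
- move=> g h /QF1d_QF1 Hg /QF1d_QF1 Hh; apply: functional_extensionality => s.
  by rewrite /phi /= (gtrue _ Hh).
- move=> g h /QF1d_QF1 Hg /QF1d_QF1 Hh E; apply: functional_extensionality => -[|[] s].
  + by rewrite Hg.2 // Hh.2.
  + by rewrite !gtrue // E.
  + by rewrite Hg.2 // Hh.2.
- move=> k /QF_QFd Hk; exists (psi k); last exact: phi_psi.
  by apply/QF1d_QF1; exact: QF1d_psi.
Qed.

Lemma QF1_id : inQF1 (fun x => x).
Proof. by apply/QF1d_QF1; split; [exact: QFd_id|]. Qed.

Lemma hom_id K (F : perm_word -> gcar K) G : hom_on G F -> G (fun x => x) ->
  F (fun x => x) = gone K.
Proof.
move=> HF Hid; apply: gidem.
exact: (esym (HF (fun x => x) (fun x => x) Hid Hid)).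
Qed.

Theorem lemma2p7 :
  (exists phi, iso_on inQF1 inQF phi) /\
  ((forall h, inQF1 h -> inQF1 (theta h)) /\
   (forall g h, inQF1 g -> inQF1 h -> theta (g \o h) = theta g \o theta h) /\
   (forall g h, inQF1 g -> inQF1 h -> theta g = theta h -> g = h)) /\
  is_HNN inQF1 theta inQF.
Proof.
split; first exact: iso_part.
split.
  split; first by move=> h /QF1d_QF1 Hh; apply/QF1d_QF1; exact: QF1d_theta.
  split.
    move=> g h _ _; apply: functional_extensionality => x.
    by rewrite /theta /= alpha_invK.
  move=> g h _ _ E; apply: functional_extensionality => w.
  have := f_equal (fun F => alpha (F (alpha_inv w))) E.
  by rewrite /theta /= !alpha_invK.
have QFa := QFd_QF QFd_alpha.
have QFai := QFd_QF QFd_alpha_inv.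
have QFid : inQF (fun x => x) by apply: QFd_QF; exact: QFd_id.
exists (fun g => g), alpha, alpha_inv.
split; first by move=> g [].
split; first by [].
split; first exact: QFa.
split; first exact: QFai.
split; first by apply: functional_extensionality => x; rewrite /= alpha_invK.
split; first by apply: functional_extensionality => x; rewrite /= alphaK.
split; first by [].
move=> K f k Hf Hr.
have Hr' : relH k f by [].
have fid : f (fun x => x) = gone K by apply: (hom_id Hf); exact: QF1_id.
exists (Fdef k f); split; last split; last split.
- move=> x y /QF_QFd Hx /QF_QFd Hy.
  have [p Hp] := dec_exists Hx; have [q Hq] := dec_exists Hy.
  exact: F_hom Hr' Hf Hp Hq.
- move=> g Hg; rewrite (@F_val _ _ _ _ (0, g, 0) Hr').
    by rewrite /val /= gmul1 gmulr1.
  by split; [apply/QF1d_QF1|].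
- rewrite (@F_val _ _ _ _ (1, (fun x => x), 0) Hr').
    by rewrite /val /= fid gmulr1 gmulr1 gmulr1.
  by split; [apply/QF1d_QF1; exact: QF1_id|].
- move=> F' HF' HF'g HF'k x /QF_QFd Hx.
  have [[[m h] n] Hp] := dec_exists Hx.
  rewrite (F_val Hr' Hp).
  case: Hp => /= Gh Ex; subst x.
  have F'id : F' (fun x => x) = gone K by apply: (hom_id HF').
  have FA j : F' (A j) = P k j.
    elim: j => [|j IH]; first exact: F'id.
    have -> : A j.+1 = alpha \o A j by [].
    by rewrite HF' // ?IH ?HF'k //; apply: QFd_QF; apply: QFd_iter; exact: QFd_alpha.
  have Fai : F' alpha_inv = ginv k.
    apply: (@gcancel_l _ k); rewrite gmulVr -HF'k -HF' //.
    have -> : alpha \o alpha_inv = (fun x => x).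
      by apply: functional_extensionality => x; rewrite /= alpha_invK.
    exact: F'id.
  have FB j : F' (B j) = Q k j.
    elim: j => [|j IH]; first exact: F'id.
    have -> : B j.+1 = alpha_inv \o B j by [].
    by rewrite HF' // ?IH ?Fai //; apply: QFd_QF; apply: QFd_iter; exact: QFd_alpha_inv.
  have QB : inQF (B n) by apply: QFd_QF; apply: QFd_iter; exact: QFd_alpha_inv.
  have QA : inQF (A m) by apply: QFd_QF; apply: QFd_iter; exact: QFd_alpha.
  have Qh : inQF h by have := proj1 (QF1d_QF1 h) Gh; case.
  have -> : (A m \o h) \o B n = A m \o (h \o B n) by [].
  rewrite HF' //; last by apply: QFd_QF; apply: QFd_comp; apply: QF_QFd.
  rewrite HF' // FA FB HF'g; last by apply/QF1d_QF1.
  by rewrite /val /= gmulA.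
Qed.
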